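(* Let $A=B[x;\alpha,\delta]_p$ be a Poisson polynomial algebra over a field $k$ of characteristic zero, with $\delta$ locally nilpotent and $\alpha\delta=\delta(\alpha+s)$ for some $s\in k^\times$, and let $\theta:B\to B[x^{\pm1}]$ be given by $\theta(b)=\sum_{n\ge0}\frac{1}{n!}\left(\frac{-1}{s}\right)^n\delta^n(b)x^{-n}$. Then $\theta$ extends uniquely to an isomorphism of Poisson Laurent polynomial algebras $\theta:B[y^{\pm1};\alpha]_p\to B[x^{\pm1};\alpha,\delta]_p$ such that $\theta(y)=x$.
   Context: If $B$ is a Poisson algebra, $\alpha$ a Poisson derivation of $B$ and $\delta$ a derivation of $B$ with $\delta(\{a,b\})=\{\delta(a),b\}+\{a,\delta(b)\}+\alpha(a)\delta(b)-\delta(a)\alpha(b)$ for $a,b\in B$, then $B[x;\alpha,\delta]_p$ is $B[x]$ with the unique Poisson bracket extending that of $B$ with $\{x,b\}=\alpha(b)x+\delta(b)$, and $B[x^{\pm1};\alpha,\delta]_p$ is the unique extension of this Poisson structure to $B[x^{\pm1}]$. $B[y^{\pm1};\alpha]_p$ denotes $B[y^{\pm1};\alpha,0]_p$, i.e. $\{y,b\}=\alpha(b)y$. *)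

(* Defs.v *)
From HB Require Import structures.
From mathcomp Require Import all_boot all_order all_algebra.
Set Implicit Arguments. Unset Strict Implicit. Unset Printing Implicit Defensive.
Import Order.TTheory GRing.Theory Num.Theory.
Local Open Scope ring_scope.

Section PoissonDefs.
Variable k : fieldType.

Definition klinear (U V : lmodType k) (f : U -> V) : Prop :=
  (forall u v, f (u + v) = f u + f v) /\ (forall (c : k) u, f (c *: u) = c *: f u).

Definition kalg_morph (A C : comAlgType k) (f : A -> C) : Prop :=
  [/\ klinear f, forall a b, f (a * b) = f a * f b & f 1 = 1].

Definition poisson_bracket (A : comAlgType k) (br : A -> A -> A) : Prop :=
  [/\ forall a, klinear (br a),
      forall b, klinear (br^~ b),
      forall a b, br a b = - br b a,
      forall a b c, br a (br b c) + br b (br c a) + br c (br a b) = 0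
    & forall a b c, br a (b * c) = br a b * c + b * br a c].

Definition derivation (A : comAlgType k) (d : A -> A) : Prop :=
  klinear d /\ forall a b, d (a * b) = d a * b + a * d b.

Definition poisson_derivation (A : comAlgType k) (br : A -> A -> A) (d : A -> A) :=
  derivation d /\ forall a b, d (br a b) = br (d a) b + br a (d b).

(* Finite Laurent sum  sum_{0<=i<N} iota(f i) x^i + iota(g i) x^{-(i+1)},
   where xi is the inverse of x. *)
Definition laurent_sum (B L : comAlgType k) (iota : B -> L) (x xi : L)
  (N : nat) (f g : nat -> B) : L :=
  \sum_(i < N) (iota (f i) * x ^+ i + iota (g i) * xi ^+ i.+1).

(* (L, iota, x) is a Laurent polynomial algebra B[x^{+-1}] over B:
   iota : B -> L is a k-algebra map, x is a unit with inverse xi, and the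
   integer powers of x form a basis of L as a (left) B-module via iota. *)
Definition is_laurent (B L : comAlgType k) (iota : B -> L) (x xi : L) : Prop :=
  [/\ kalg_morph iota,
      x * xi = 1,
      forall z : L, exists N f g, z = laurent_sum iota x xi N f g
    & forall N f g, laurent_sum iota x xi N f g = 0 ->
        forall i, (i < N)%N -> f i = 0 /\ g i = 0].

End PoissonDefs.

(* Main.v *)
Require Import Defs.
From HB Require Import structures.
From mathcomp Require Import all_boot all_order all_algebra.
From mathcomp Require Import ring.
Set Implicit Arguments. Unset Strict Implicit. Unset Printing Implicit Defensive.
Import Order.TTheory GRing.Theory Num.Theory.
Local Open Scope ring_scope.

Section RM.
Variable k : fieldType.
Variables (B C : comAlgType k) (f : B -> C) (hf : kalg_morph f).
Lemma km_zmod : zmod_morphism f.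
Proof. case: hf => -[hA hZ] _ _ x y. by rewrite hA -scaleN1r hZ scaleN1r. Qed.
Lemma km_mon : monoid_morphism f.
Proof. by case: hf => _ hM h1; split. Qed.
Definition rm : {rmorphism B -> C} :=
  HB.pack f (GRing.isZmodMorphism.Build B C f km_zmod) (GRing.isMonoidMorphism.Build B C f km_mon).
Lemma rmE x : rm x = f x. Proof. by []. Qed.
Lemma km_scale (c : k) x : f (c *: x) = c *: f x.
Proof. by case: hf => -[]. Qed.
Lemma km0 : f 0 = 0. Proof. exact: (rmorph0 rm). Qed.
Lemma km1 : f 1 = 1. Proof. exact: (rmorph1 rm). Qed.
Lemma kmD x y : f (x + y) = f x + f y. Proof. exact: (rmorphD rm). Qed.
Lemma kmN x : f (- x) = - f x. Proof. exact: (rmorphN rm). Qed.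
Lemma kmB x y : f (x - y) = f x - f y. Proof. exact: (rmorphB rm). Qed.
Lemma kmM x y : f (x * y) = f x * f y. Proof. exact: (rmorphM rm). Qed.
Lemma kmMn x n : f (x *+ n) = f x *+ n. Proof. exact: (rmorphMn rm). Qed.
Lemma kmX x n : f (x ^+ n) = f x ^+ n. Proof. exact: (rmorphXn rm). Qed.
End RM.

Lemma ev_morph (k : fieldType) (B L C : comAlgType k) (iota : B -> L) (hi : kalg_morph iota)
  (F : L -> C) (hF : kalg_morph F) (hFi : kalg_morph (fun b => F (iota b))) p w :
  F ((map_poly (rm hi) p).[w]) = (map_poly (rm hFi) p).[F w].
Proof.
rewrite -[F _]/(rm hF _) -horner_map -map_poly_comp.
by congr (_.[_]); apply: eq_map_poly.
Qed.
Section Laurent.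
Variable k : fieldType.
Variables (B L : comAlgType k) (iota : B -> L) (x xi : L) (hL : is_laurent iota x xi).
Let hi : kalg_morph iota. Proof. by case: hL. Qed.
Let hx : x * xi = 1. Proof. by case: hL. Qed.
Definition evx (p : {poly B}) := (map_poly (rm hi) p).[x].

Lemma evxD p q : evx (p + q) = evx p + evx q.
Proof. by rewrite /evx rmorphD hornerD. Qed.
Lemma evxM p q : evx (p * q) = evx p * evx q.
Proof. by rewrite /evx rmorphM hornerM. Qed.
Lemma evxC c : evx c%:P = iota c.
Proof. by rewrite /evx map_polyC hornerC. Qed.
Lemma evxXn n : evx 'X^n = x ^+ n.
Proof. by rewrite /evx map_polyXn hornerXn. Qed.

Lemma evxN p : evx (- p) = - evx p.
Proof. by rewrite /evx rmorphN hornerN. Qed.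
Lemma evx0 : evx 0 = 0.
Proof. by rewrite /evx rmorph0 horner0. Qed.
Lemma evx_sum n (F : 'I_n -> {poly B}) : evx (\sum_(i < n) F i) = \sum_(i < n) evx (F i).
Proof. exact: (big_morph _ evxD evx0). Qed.

Lemma evx_form p : evx p = \sum_(i < size p) iota p`_i * x ^+ i.
Proof.
rewrite /evx (horner_coef_wide _ (size_poly _ _)).
by apply: eq_bigr => i _; rewrite coef_map.
Qed.

Lemma xpow n : xi ^+ n * x ^+ n = 1.
Proof. by rewrite -exprMn mulrC hx expr1n. Qed.

Lemma laurent_rep z : exists N (p : {poly B}), z = xi ^+ N * evx p.
Proof.
case: hL => _ _ hsp _; have [N [f [g ->]]] := hsp z.
exists N, (\sum_(i < N) ((f i)%:P * 'X^(i + N) + (g i)%:P * 'X^(N - i.+1))).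
rewrite evx_sum mulr_sumr /laurent_sum; apply: eq_bigr => i _.
rewrite evxD !evxM !evxC !evxXn.
rewrite mulrDr; congr (_ + _).
  rewrite exprD; transitivity (iota (f i) * x ^+ i * (xi ^+ N * x ^+ N)); first by rewrite xpow mulr1.
  ring.
have hiN : (i.+1 <= N)%N := ltn_ord i.
rewrite -[in xi ^+ N](subnKC hiN) exprD.
transitivity (iota (g i) * xi ^+ i.+1 * (xi ^+ (N - i.+1) * x ^+ (N - i.+1))); first by rewrite xpow mulr1.
ring.
Qed.

Lemma evx_inj p : evx p = 0 -> p = 0.
Proof.
move=> h; case: hL => _ _ _ hind.
have := hind (size p) (fun i => p`_i) (fun _ => 0).
have E : laurent_sum iota x xi (size p) (fun i : nat => p`_i) (fun=> 0) = 0.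
  rewrite -h /evx (horner_coef_wide _ (size_poly _ _)) /laurent_sum; apply: eq_bigr => i _.
  by rewrite (km0 hi) mul0r addr0 coef_map.
move=> /(_ E) H; apply/polyP => i; rewrite coef0.
case: (ltnP i (size p)) => hi'; first by case: (H i hi').
by rewrite nth_default.
Qed.

Section Lift.
Variables (C : comAlgType k) (phi : B -> C) (hphi : kalg_morph phi) (u ui : C) (hu : u * ui = 1).
Definition evu (p : {poly B}) := (map_poly (rm hphi) p).[u].
Lemma evuD p q : evu (p + q) = evu p + evu q.
Proof. by rewrite /evu rmorphD hornerD. Qed.
Lemma evuM p q : evu (p * q) = evu p * evu q.
Proof. by rewrite /evu rmorphM hornerM. Qed.
Lemma evuC c : evu c%:P = phi c.
Proof. by rewrite /evu map_polyC hornerC. Qed.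
Lemma evuXn n : evu 'X^n = u ^+ n.
Proof. by rewrite /evu map_polyXn hornerXn. Qed.
Lemma upow n : ui ^+ n * u ^+ n = 1.
Proof. by rewrite -exprMn mulrC hu expr1n. Qed.

Lemma wd N M p q : xi ^+ N * evx p = xi ^+ M * evx q -> ui ^+ N * evu p = ui ^+ M * evu q.
Proof.
move=> h.
have h2 : x ^+ M * evx p = x ^+ N * evx q.
  have e1 : x ^+ M * evx p = x ^+ (N + M) * (xi ^+ N * evx p).
    transitivity (x ^+ M * evx p * (xi ^+ N * x ^+ N)); first by rewrite xpow mulr1.
    rewrite exprD; ring.
  have e2 : x ^+ N * evx q = x ^+ (N + M) * (xi ^+ M * evx q).
    transitivity (x ^+ N * evx q * (xi ^+ M * x ^+ M)); first by rewrite xpow mulr1.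
    rewrite exprD; ring.
  by rewrite e1 e2 h.
have h3 : p * 'X^M = q * 'X^N.
  apply/eqP; rewrite -subr_eq0; apply/eqP/evx_inj.
  by rewrite evxD evxN !evxM !evxXn (mulrC (evx p)) h2 mulrC subrr.
have e3 : ui ^+ N * evu p = ui ^+ (N + M) * evu (p * 'X^M).
  transitivity (ui ^+ N * evu p * (ui ^+ M * u ^+ M)); first by rewrite upow mulr1.
  rewrite evuM evuXn exprD; ring.
have e4 : ui ^+ M * evu q = ui ^+ (N + M) * evu (q * 'X^N).
  transitivity (ui ^+ M * evu q * (ui ^+ N * u ^+ N)); first by rewrite upow mulr1.
  rewrite evuM evuXn exprD; ring.
by rewrite e3 e4 h3.
Qed.

Lemma rep_ex z : exists np : nat * {poly B}, z == xi ^+ np.1 * evx np.2.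
Proof. by have [N [p ->]] := laurent_rep z; exists (N, p). Qed.

Definition lift z := let np := xchoose (rep_ex z) in ui ^+ np.1 * evu np.2.

Lemma liftE N p : lift (xi ^+ N * evx p) = ui ^+ N * evu p.
Proof. by rewrite /lift; apply: wd; rewrite -(eqP (xchooseP (rep_ex _))). Qed.

Lemma lift_iota b : lift (iota b) = phi b.
Proof. by have := liftE 0 b%:P; rewrite !mul1r evxC evuC. Qed.
Lemma lift_x : lift x = u.
Proof. by have := liftE 0 'X^1; rewrite !mul1r evxXn evuXn !expr1. Qed.

Lemma lift_morph : kalg_morph lift.
Proof.
have sum2 z z' : exists N p q, z = xi ^+ N * evx p /\ z' = xi ^+ N * evx q.
  have [N [p ->]] := laurent_rep z; have [M [q ->]] := laurent_rep z'.
  exists (N + M), (p * 'X^M), (q * 'X^N); rewrite !evxM !evxXn exprD; split.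
    transitivity (xi ^+ N * evx p * (xi ^+ M * x ^+ M)); first by rewrite xpow mulr1.
    ring.
  transitivity (xi ^+ M * evx q * (xi ^+ N * x ^+ N)); first by rewrite xpow mulr1.
  ring.
have sumu N p q : ui ^+ N * evu p + ui ^+ N * evu q = ui ^+ N * evu (p + q).
  by rewrite evuD mulrDr.
split; first split.
- move=> z z'; have [N [p [q [-> ->]]]] := sum2 z z'.
  by rewrite -mulrDr -evxD !liftE sumu.
- move=> c z; have [N [p ->]] := laurent_rep z.
  have -> : c *: (xi ^+ N * evx p) = xi ^+ N * evx ((c *: 1)%:P * p).
    by rewrite evxM evxC km_scale // (km1 hi) mulrCA mulr_algl.
  rewrite !liftE evuM evuC km_scale // (km1 hphi) mulrCA mulr_algl //.
- move=> z z'; have [N [p ->]] := laurent_rep z; have [M [q ->]] := laurent_rep z'.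
  rewrite mulrACA -exprD -evxM !liftE evuM exprD; ring.
- by have := liftE 0 1%:P; rewrite !mul1r evxC evuC (km1 hi) (km1 hphi).
Qed.

End Lift.

Lemma laurent_uniq (C : comAlgType k) (F G : L -> C) (hF : kalg_morph F) (hG : kalg_morph G) :
  (forall b, F (iota b) = G (iota b)) -> F x = G x -> F =1 G.
Proof.
move=> hb hxx z; have [N [p ->]] := laurent_rep z.
have hFi : kalg_morph (fun b => F (iota b)).
  case: hF => -[hA hZ] hM h1; case: hi => -[iA iZ] iM i1.
  by split; [split=> *|move=> *|]; rewrite ?iA ?iZ ?iM ?i1 ?hA ?hZ ?hM ?h1.
have hGi : kalg_morph (fun b => G (iota b)).
  case: hG => -[hA hZ] hM h1; case: hi => -[iA iZ] iM i1.
  by split; [split=> *|move=> *|]; rewrite ?iA ?iZ ?iM ?i1 ?hA ?hZ ?hM ?h1.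
have hxiF : F xi = G xi.
  have e1 : F x * F xi = 1 by rewrite -(rmE hF) -rmorphM hx rmorph1.
  have e2 : G x * G xi = 1 by rewrite -(rmE hG) -rmorphM hx rmorph1.
  by rewrite -[F xi]mul1r -e2 -hxx mulrAC e1 mul1r.
rewrite -!(rmE hF) -!(rmE hG) !rmorphM !rmorphXn /= hxiF; congr (_ * _).
rewrite /evx (ev_morph hi hF hFi) (ev_morph hi hG hGi) hxx; congr (_.[_]).
by apply: eq_map_poly => b /=; rewrite hb.
Qed.

Lemma laurent_ext (C : comAlgType k) (phi : B -> C) (hphi : kalg_morph phi) (u ui : C) (hu : u * ui = 1) :
  exists F : L -> C, [/\ kalg_morph F, forall b, F (iota b) = phi b & F x = u].
Proof. exists (lift hphi u ui); split; [exact: lift_morph | exact: lift_iota | exact: lift_x]. Qed.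

End Laurent.
Lemma sum_wide (R : nmodType) n m (F : nat -> R) :
  (forall i, (n <= i)%N -> F i = 0) -> (n <= m)%N -> \sum_(i < m) F i = \sum_(i < n) F i.
Proof.
move=> hF hnm; rewrite (big_ord_widen m F hnm) [RHS]big_mkcond; apply: eq_bigr => i _.
by case: ltnP => // h; rewrite hF.
Qed.

Section Exp.
Variable k : fieldType.
Variable char0 : [pchar k] =i pred0.
Variables (B : comAlgType k) (brB : B -> B -> B) (hB : poisson_bracket brB).
Variables (alpha delta : B -> B) (halpha : poisson_derivation brB alpha) (hdelta : derivation delta).
Variable hdelta_br : forall a b, delta (brB a b) =
      brB (delta a) b + brB a (delta b) + alpha a * delta b - delta a * alpha b.
Variable hnil : forall b, exists n, iter n delta b = 0.
Variable s : k.
Variable halphadelta : forall b, alpha (delta b) = delta (alpha b + s *: b).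

Lemma natk_neq0 n : (n.+1%:R : k) != 0.
Proof. by have /pcharf0P -> := char0. Qed.

Lemma mulIn (V : lmodType k) (u v : V) n : u *+ n.+1 = v *+ n.+1 -> u = v.
Proof.
rewrite -!scaler_nat => /(congr1 (fun z => (n.+1%:R)^-1 *: z)).
by rewrite !scalerA mulVf ?natk_neq0 // !scale1r.
Qed.

Lemma lin0 (U V : lmodType k) (f : U -> V) : klinear f -> f 0 = 0.
Proof. by case=> hA _; apply/eqP; rewrite -(addrI (f 0) (_ : f 0 + f 0 = f 0 + 0)) // -hA !addr0. Qed.
Lemma linN (U V : lmodType k) (f : U -> V) : klinear f -> forall u, f (- u) = - f u.
Proof. by case=> _ hZ u; rewrite -scaleN1r hZ scaleN1r. Qed.
Lemma linB (U V : lmodType k) (f : U -> V) : klinear f -> forall u v, f (u - v) = f u - f v.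
Proof. by move=> hf u v; case: (hf) => hA _; rewrite hA linN. Qed.
Lemma linMn (U V : lmodType k) (f : U -> V) : klinear f -> forall u n, f (u *+ n) = f u *+ n.
Proof. by case=> _ hZ u n; rewrite -!scaler_nat hZ. Qed.

Lemma dlin : klinear delta. Proof. by case: hdelta. Qed.
Lemma dD a b : delta (a + b) = delta a + delta b. Proof. by case: dlin. Qed.
Lemma dZ (c : k) a : delta (c *: a) = c *: delta a. Proof. by case: dlin. Qed.
Lemma d0 : delta 0 = 0. Proof. exact: lin0 dlin. Qed.
Lemma dN a : delta (- a) = - delta a. Proof. exact: (linN dlin a). Qed.
Lemma dB a b : delta (a - b) = delta a - delta b. Proof. exact: (linB dlin a b). Qed.
Lemma dM a b : delta (a * b) = delta a * b + a * delta b. Proof. by case: hdelta. Qed.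
Lemma d1 : delta 1 = 0.
Proof. by apply/eqP; rewrite -(addrI (delta 1) (_ : delta 1 + delta 1 = delta 1 + 0)) // addr0 -{3}[1]mulr1 dM mulr1 mul1r. Qed.

Lemma alin : klinear alpha. Proof. by case: halpha => -[]. Qed.
Lemma aD a b : alpha (a + b) = alpha a + alpha b. Proof. by case: alin. Qed.
Lemma aZ (c : k) a : alpha (c *: a) = c *: alpha a. Proof. by case: alin. Qed.
Lemma a0 : alpha 0 = 0. Proof. exact: lin0 alin. Qed.
Lemma aN a : alpha (- a) = - alpha a. Proof. exact: (linN alin a). Qed.
Lemma aB a b : alpha (a - b) = alpha a - alpha b. Proof. exact: (linB alin a b). Qed.
Lemma aM a b : alpha (a * b) = alpha a * b + a * alpha b. Proof. by case: halpha => -[]. Qed.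

Lemma iterd0 n : iter n delta 0 = 0.
Proof. by elim: n => //= n ->; rewrite d0. Qed.
Lemma iterdD n a b : iter n delta (a + b) = iter n delta a + iter n delta b.
Proof. by elim: n => //= n ->; rewrite dD. Qed.
Lemma iterdZ n (c : k) a : iter n delta (c *: a) = c *: iter n delta a.
Proof. by elim: n => //= n ->; rewrite dZ. Qed.
Lemma iterdN n a : iter n delta (- a) = - iter n delta a.
Proof. by elim: n => //= n ->; rewrite dN. Qed.
Lemma iterd_big N n b : iter N delta b = 0 -> (N <= n)%N -> iter n delta b = 0.
Proof. by move=> h /subnK <-; rewrite iterD h iterd0. Qed.

Lemma alpha_iter n b : alpha (iter n delta b) = iter n delta (alpha b) + (n%:R * s) *: iter n delta b.
Proof.
elim: n => [|n IH] /=; first by rewrite mul0r scale0r addr0.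
rewrite halphadelta IH -addrA -scalerDl dD dZ; congr (_ + _ *: _).
by rewrite mulrSr mulrDl mul1r.
Qed.

Definition cf (t : k) n := ((n`!)%:R)^-1 * t ^+ n.
Lemma cf0 t : cf t 0 = 1. Proof. by rewrite /cf invr1 mul1r expr0. Qed.
Lemma cfS t n : cf t n.+1 *+ n.+1 = t * cf t n.
Proof.
rewrite /cf factS natrM invfM -mulr_natr exprS; have h := natk_neq0 n.
rewrite [_ * n.+1%:R]mulrC !mulrA mulfV // mul1r; ring.
Qed.

Lemma hnilb b : exists n, iter n delta b == 0.
Proof. by have [n hn] := hnil b; exists n; apply/eqP. Qed.
Definition nb b := ex_minn (hnilb b).
Lemma nbP b : iter (nb b) delta b = 0.
Proof. by rewrite /nb; case: ex_minnP => n /eqP. Qed.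
Lemma nb_min b N : iter N delta b = 0 -> (nb b <= N)%N.
Proof. by rewrite /nb; case: ex_minnP => n _ h /eqP /h. Qed.

Definition E t b : {poly B} := \poly_(n < nb b) (cf t n *: iter n delta b).
Lemma coefE t b n : (E t b)`_n = cf t n *: iter n delta b.
Proof.
rewrite /E coef_poly; case: ltnP => // h.
by rewrite (iterd_big (nbP b) h) scaler0.
Qed.
Lemma sizeE t b N : iter N delta b = 0 -> (size (E t b) <= N)%N.
Proof. by move=> h; apply: leq_trans (size_poly _ _) (nb_min h). Qed.

Lemma coef0E t b : (E t b)`_0 = b.
Proof. by rewrite coefE cf0 scale1r. Qed.
Lemma E_add t a b : E t (a + b) = E t a + E t b.
Proof. by apply/polyP => i; rewrite coefD !coefE iterdD scalerDr. Qed.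
Lemma E0 t : E t 0 = 0.
Proof. by apply/polyP => i; rewrite coefE iterd0 scaler0 coef0. Qed.
Lemma E_opp t a : E t (- a) = - E t a.
Proof. by apply/polyP => i; rewrite coefN !coefE iterdN scalerN. Qed.
Lemma E_sub t a b : E t (a - b) = E t a - E t b.
Proof. by rewrite E_add E_opp. Qed.
Lemma E_scale t (c : k) a : E t (c *: a) = (c *: 1)%:P * E t a.
Proof. by apply/polyP => i; rewrite coefCM !coefE iterdZ mulr_algl !scalerA mulrC. Qed.
Lemma E_one t : E t 1 = 1.
Proof.
apply/polyP => i; rewrite coefE coefC; case: i => [|i]; first by rewrite cf0 scale1r.
by rewrite iterSr d1 iterd0 scaler0.
Qed.

Lemma E_deriv t b : (E t b)^`() = (t *: 1)%:P * E t (delta b).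
Proof.
apply/polyP => i; rewrite coef_deriv coefCM !coefE -iterSr.
by rewrite -scaler_nat scalerA mulrC mulr_natr cfS mulr_algl scalerA.
Qed.

Lemma poly_deriv_eq (p q : {poly B}) : p^`() = q^`() -> p`_0 = q`_0 -> p = q.
Proof.
move=> hd h0; apply/polyP => -[//|i].
by apply: (@mulIn B _ _ i); rewrite -!coef_deriv hd.
Qed.

Lemma nil_ind (P : B -> B -> Prop) :
  (forall b, P 0 b) -> (forall a, P a 0) ->
  (forall a b, P (delta a) b -> P a (delta b) -> P a b) -> forall a b, P a b.
Proof.
move=> h0l h0r hst a b; have [i hi] := hnil a; have [j hj] := hnil b.
move: {2}(i + j)%N (leqnn (i + j)) => n; elim: n a b i j hi hj => [|n IH] a b i j hi hj hn.
  by move: hn; rewrite leqn0 addn_eq0 => /andP[/eqP hi0 _]; move: hi; rewrite hi0 /= => ->.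
case: i hi hn => [|i] hi hn; first by move: hi => /= ->.
case: j hj hn => [|j] hj hn; first by move: hj => /= ->.
apply: hst.
  by apply: (IH _ _ i j.+1 _ hj); [rewrite -iterSr | move: hn; rewrite addSn ltnS].
by apply: (IH _ _ i.+1 j hi); [rewrite -iterSr | move: hn; rewrite addnS ltnS].
Qed.

Lemma E_mul t a b : E t (a * b) = E t a * E t b.
Proof.
move: a b; apply: (nil_ind (P := fun a b => E t (a * b) = E t a * E t b)) => [b|a|a b h1 h2].
- by rewrite mul0r E0 mul0r.
- by rewrite mulr0 E0 mulr0.
apply: poly_deriv_eq; last by rewrite coefM big_ord1 !coef0E.
rewrite derivM !E_deriv dM E_add h1 h2; ring.
Qed.

Lemma size_deriv_le (p : {poly B}) : (size p^`() <= size p)%N.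
Proof. by have [->|/lt_size_deriv/ltnW //] := eqVneq p 0; rewrite deriv0. Qed.

Lemma brlr a : klinear (brB a). Proof. by case: hB. Qed.
Lemma brll b : klinear (brB^~ b). Proof. by case: hB. Qed.
Lemma br0r a : brB a 0 = 0. Proof. exact: lin0 (brlr a). Qed.
Lemma br0l b : brB 0 b = 0. Proof. exact: (lin0 (brll b)). Qed.
Lemma brDr a b c : brB a (b + c) = brB a b + brB a c. Proof. by case: (brlr a). Qed.
Lemma brDl a b c : brB (a + b) c = brB a c + brB b c. Proof. by case: (brll c) => h _; apply: h. Qed.
Lemma brZr a (c : k) b : brB a (c *: b) = c *: brB a b. Proof. by case: (brlr a). Qed.
Lemma brZl a (c : k) b : brB (c *: a) b = c *: brB a b. Proof. by case: (brll b) => _ h; apply: h. Qed.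
Lemma brMnr a b n : brB a (b *+ n) = brB a b *+ n. Proof. exact: (linMn (brlr a)). Qed.
Lemma brMnl a b n : brB (a *+ n) b = brB a b *+ n. Proof. exact: (linMn (brll b)). Qed.

Definition brc (p q : {poly B}) : {poly B} :=
  \sum_(i < size p) \sum_(j < size q) (brB p`_i q`_j)%:P * 'X^(i + j).

Lemma brc_wide n m (p q : {poly B}) : (size p <= n)%N -> (size q <= m)%N ->
  brc p q = \sum_(i < n) \sum_(j < m) (brB p`_i q`_j)%:P * 'X^(i + j).
Proof.
move=> hn hm; rewrite /brc.
rewrite [RHS](@sum_wide _ (size p) n (fun i => \sum_(j < m) (brB p`_i q`_j)%:P * 'X^(i + j))) //.
  apply: eq_bigr => i _.
  rewrite [RHS](@sum_wide _ (size q) m (fun j => (brB p`_i q`_j)%:P * 'X^(i + j))) // => j hj.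
  by rewrite (nth_default _ hj) br0r mul0r.
by move=> i hi; apply: big1 => j _; rewrite (nth_default _ hi) br0l mul0r.
Qed.

Lemma brc0l (q : {poly B}) : brc 0 q = 0. Proof. by rewrite /brc size_poly0 big_ord0. Qed.
Lemma brc0r (p : {poly B}) : brc p 0 = 0. Proof. by rewrite /brc size_poly0; apply: big1 => i _; rewrite big_ord0. Qed.

Lemma brc_coef0 (p q : {poly B}) : (brc p q)`_0 = brB p`_0 q`_0.
Proof.
rewrite (@brc_wide (size p).+1 (size q).+1) // coef_sum big_ord_recl coef_sum big_ord_recl.
rewrite /= coefCM coefXn eqxx mulr1 big1 ?addr0; last first.
  by move=> j _; rewrite coefCM coefXn /= mulr0.
rewrite big1 ?addr0 // => i _; rewrite coef_sum big1 // => j _.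
by rewrite coefCM coefXn addSn /= mulr0.
Qed.

Lemma derivCXn (c : B) n : (c%:P * 'X^n)^`() = (c%:P * 'X^(n.-1)) *+ n.
Proof. by rewrite derivM derivC mul0r add0r derivXn mulrnAr. Qed.

Lemma brc_deriv (p q : {poly B}) : (brc p q)^`() = brc p^`() q + brc p q^`().
Proof.
rewrite (@brc_wide (size p).+1 (size q).+1) // (@brc_wide (size p) (size q).+1 p^`()) ?size_deriv_le //.
rewrite (@brc_wide (size p).+1 (size q) p q^`()) ?size_deriv_le //.
rewrite !raddf_sum /=.
under eq_bigr => i _ do rewrite raddf_sum /=.
under eq_bigr => i _ do under eq_bigr => j _ do rewrite derivCXn mulrnDr.
under eq_bigr => i _ do rewrite big_split /=.
rewrite big_split /=; congr (_ + _).
  rewrite big_ord_recl big1 ?add0r; last by move=> j _; rewrite mulr0n.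
  apply: eq_bigr => i _; apply: eq_bigr => j _.
  by rewrite coef_deriv brMnl polyCMn mulrnAl addSn.
apply: eq_bigr => i _; rewrite big_ord_recl mulr0n add0r; apply: eq_bigr => j _.
by rewrite coef_deriv brMnr polyCMn mulrnAl addnS.
Qed.

Lemma brc_scalel (c : k) (p q : {poly B}) : brc ((c *: 1)%:P * p) q = (c *: 1)%:P * brc p q.
Proof.
rewrite (@brc_wide (size p) (size q) ((c *: 1)%:P * p)) //; last by rewrite mul_polyC size_scale_leq.
rewrite /brc mulr_sumr; apply: eq_bigr => i _; rewrite mulr_sumr; apply: eq_bigr => j _.
by rewrite coefCM mulr_algl brZl -[c *: brB _ _]mulr_algl polyCM mulrA.
Qed.
Lemma brc_scaler (c : k) (p q : {poly B}) : brc p ((c *: 1)%:P * q) = (c *: 1)%:P * brc p q.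
Proof.
rewrite (@brc_wide (size p) (size q) p ((c *: 1)%:P * q)) //; last by rewrite mul_polyC size_scale_leq.
rewrite /brc mulr_sumr; apply: eq_bigr => i _; rewrite mulr_sumr; apply: eq_bigr => j _.
by rewrite coefCM mulr_algl brZr -[c *: brB _ _]mulr_algl polyCM mulrA.
Qed.

Definition R0 a b := alpha a * delta b - delta a * alpha b.

Lemma d_alpha u : delta (alpha u) = alpha (delta u) - (s *: 1) * delta u.
Proof. by rewrite halphadelta dD dZ mulr_algl addrK. Qed.

Lemma R0_delta a b : delta (R0 a b) = R0 (delta a) b + R0 a (delta b).
Proof. by rewrite /R0 dB !dM !d_alpha; ring. Qed.

Lemma E_R0 t a b : E t (R0 a b) = E t (alpha a) * E t (delta b) - E t (delta a) * E t (alpha b).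
Proof. by rewrite /R0 E_sub !E_mul. Qed.

Lemma R0_0l b : R0 0 b = 0. Proof. by rewrite /R0 d0 a0 !mul0r subrr. Qed.
Lemma R0_0r a : R0 a 0 = 0. Proof. by rewrite /R0 d0 a0 !mulr0 subrr. Qed.

Lemma dbr a b : delta (brB a b) = brB (delta a) b + brB a (delta b) + R0 a b.
Proof. by rewrite hdelta_br /R0 addrA. Qed.

Local Opaque R0.

Lemma E_br t a b : E t (brB a b) = brc (E t a) (E t b) + (t *: 1)%:P * ('X * E t (R0 a b)).
Proof.
move: a b; apply: (nil_ind (P := fun a b => E t (brB a b) = brc (E t a) (E t b) + (t *: 1)%:P * ('X * E t (R0 a b)))) => [b|a|a b h1 h2].
- by rewrite br0l E0 brc0l R0_0l E0 !mulr0 addr0.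
- by rewrite br0r E0 brc0r R0_0r E0 !mulr0 addr0.
apply: poly_deriv_eq; last first.
  by rewrite coefD brc_coef0 !coef0E coefCM coefXM /= mulr0 addr0.
rewrite E_deriv.
rewrite dbr (E_add t (_ + _)) (E_add t (brB _ _)) h1 h2 derivD brc_deriv !E_deriv brc_scalel brc_scaler.
rewrite derivM derivC mul0r add0r derivM derivX mul1r E_deriv R0_delta (E_add t (R0 _ _)); ring.
Qed.

Lemma E_alpha t b : map_poly alpha (E t b) = E t (alpha b) + ((s * t) *: 1)%:P * ('X * E t (delta b)).
Proof.
apply/polyP => i; rewrite coefD coef_map_id0; last exact: a0.
rewrite coefCM coefXM !coefE aZ alpha_iter.
rewrite scalerDr mulr_algl; congr (_ + _); case: i => [|i] /=.
  by rewrite mulr0n mul0r scale0r !scaler0.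
rewrite -iterSr !scalerA; congr (_ *: _).
transitivity (s * (t * cf t i)); last by ring.
by rewrite -cfS -mulr_natr; ring.
Qed.

Lemma E_delta t b : map_poly delta (E t b) = E t (delta b).
Proof. by apply/polyP => i; rewrite coef_map_id0; [rewrite !coefE dZ -iterSr | exact: d0]. Qed.

Lemma E_inv t b N : iter N delta b = 0 ->
  \sum_(n < N) (cf t n *: 1)%:P * 'X^n * E (- t) (iter n delta b) = b%:P.
Proof.
case: N => [/= ->|N hN]; first by rewrite big_ord0.
pose U n := (cf t n *: 1)%:P * 'X^n * E (- t) (iter n.+1 delta b).
apply: poly_deriv_eq; last first.
  rewrite coef_sum big_ord_recl big1 => [|i _]; last by rewrite -mulrA coefCM coefXnM /= mulr0.
  by rewrite cf0 scale1r expr0 polyC1 !mul1r coef0E coefC /= addr0.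
rewrite derivC raddf_sum big_ord_recl /=.
have hT0 : ((cf t 0 *: 1)%:P * 'X^0 * E (- t) (iter 0 delta b))^`() = - ((t *: 1)%:P * U 0).
  rewrite /U cf0 scale1r polyC1 expr0 !mul1r /= E_deriv scaleNr polyCN; ring.
have hTS n : ((cf t n.+1 *: 1)%:P * 'X^(n.+1) * E (- t) (iter n.+1 delta b))^`() =
    (t *: 1)%:P * U n - (t *: 1)%:P * U n.+1.
  have hc : (cf t n.+1 *: 1)%:P *+ n.+1 = (t *: 1)%:P * (cf t n *: 1 : B)%:P.
    by rewrite -polyCMn -polyCM scalerMnl cfS mulr_algl scalerA.
  rewrite /U derivM derivM derivC mul0r add0r derivXn /= E_deriv.
  rewrite mulrnAr -mulrnAl hc scaleNr polyCN; ring.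
rewrite (eq_bigr (fun i : 'I_N => (t *: 1)%:P * U i - (t *: 1)%:P * U i.+1)); last first.
  by move=> i _; exact: hTS.
have tel M : \sum_(i < M) ((t *: 1)%:P * U i - (t *: 1)%:P * U i.+1) = (t *: 1)%:P * U 0 - (t *: 1)%:P * U M.
  elim: M => [|M IH]; first by rewrite big_ord0 subrr.
  by rewrite big_ord_recr /= IH addrA subrK.
have UN : U N = 0 by rewrite /U hN E0 mulr0.
by rewrite hT0 tel UN mulr0 subr0 addNr.
Qed.

Lemma Dpoly (q : {poly B}) : 'X * q^`() = \poly_(j < size q) (q`_j *+ j).
Proof.
apply/polyP => j; rewrite coefXM coef_poly.
case: j => [|j]; first by rewrite /= mulr0n if_same.
rewrite /= coef_deriv; case: ltnP => h //. by rewrite nth_default ?mul0rn.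
Qed.

Section LSide.
Variables (L : comAlgType k) (iota : B -> L) (hi : kalg_morph iota) (x w : L) (hxw : x * w = 1).
Variables (br : L -> L -> L) (hbr : poisson_bracket br).
Variable hbrB : forall a b, br (iota a) (iota b) = iota (brB a b).
Variable hbrx : forall b, br x (iota b) = iota (alpha b) * x + iota (delta b).

Definition evw (p : {poly B}) := (map_poly (rm hi) p).[w].
Lemma evwD p q : evw (p + q) = evw p + evw q. Proof. by rewrite /evw rmorphD hornerD. Qed.
Lemma evwN p : evw (- p) = - evw p. Proof. by rewrite /evw rmorphN hornerN. Qed.
Lemma evwB p q : evw (p - q) = evw p - evw q. Proof. by rewrite evwD evwN. Qed.
Lemma evwM p q : evw (p * q) = evw p * evw q. Proof. by rewrite /evw rmorphM hornerM. Qed.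
Lemma evwC c : evw c%:P = iota c. Proof. by rewrite /evw map_polyC hornerC. Qed.
Lemma evwXn n : evw 'X^n = w ^+ n. Proof. by rewrite /evw map_polyXn hornerXn. Qed.
Lemma evwX : evw 'X = w. Proof. by rewrite /evw map_polyX hornerX. Qed.
Lemma evw0 : evw 0 = 0. Proof. by rewrite /evw rmorph0 horner0. Qed.
Lemma evw_sum n (F : 'I_n -> {poly B}) : evw (\sum_(i < n) F i) = \sum_(i < n) evw (F i).
Proof. exact: (big_morph _ evwD evw0). Qed.
Lemma evw_wide n (p : {poly B}) : (size p <= n)%N -> evw p = \sum_(i < n) iota p`_i * w ^+ i.
Proof.
move=> h; rewrite /evw (horner_coef_wide _ (leq_trans (size_poly _ _) h)).
by apply: eq_bigr => i _; rewrite coef_map.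
Qed.

Lemma brLr u : klinear (br u). Proof. by case: hbr. Qed.
Lemma brLl v : klinear (br^~ v). Proof. by case: hbr. Qed.
Lemma brLA u v : br u v = - br v u. Proof. by case: hbr. Qed.
Lemma brLMr u v z : br u (v * z) = br u v * z + v * br u z. Proof. by case: hbr. Qed.
Lemma brL0r u : br u 0 = 0. Proof. exact: lin0 (brLr u). Qed.
Lemma brL0l v : br 0 v = 0. Proof. exact: (lin0 (brLl v)). Qed.
Lemma brLDr u v z : br u (v + z) = br u v + br u z. Proof. by case: (brLr u). Qed.
Lemma brLDl u v z : br (u + v) z = br u z + br v z. Proof. by case: (brLl z) => h _; apply: h. Qed.
Lemma brLMl u v z : br (v * z) u = br v u * z + v * br z u.
Proof. by rewrite brLA brLMr !(brLA u) mulNr mulrN opprD !opprK. Qed.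
Lemma brL_sumr u n (F : 'I_n -> L) : br u (\sum_(i < n) F i) = \sum_(i < n) br u (F i).
Proof. exact: (big_morph _ (brLDr u) (brL0r u)). Qed.
Lemma brL_suml v n (F : 'I_n -> L) : br (\sum_(i < n) F i) v = \sum_(i < n) br (F i) v.
Proof. exact: (big_morph _ (fun a b => brLDl a b v) (brL0l v)). Qed.
Lemma brL_self u : br u u = 0.
Proof.
apply: (@mulIn L _ _ 1); rewrite mul0rn mulr2n; apply/eqP; rewrite addr_eq0; apply/eqP.
exact: brLA.
Qed.

Lemma brx_w : br x w = 0.
Proof.
have h : br x (x * w) = 0 by rewrite hxw; apply/eqP; rewrite -(addrI (br x 1) (_ : br x 1 + br x 1 = br x 1 + 0)) // addr0 -{3}[1]mulr1 brLMr mulr1 mul1r.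
move: h; rewrite brLMr brL_self mul0r add0r => h.
by rewrite -[br x w]mul1r -hxw mulrC mulrA (mulrC _ x) h mul0r.
Qed.

Lemma brL1l u : br 1 u = 0.
Proof.
apply/eqP; rewrite -(addrI (br 1 u) (_ : br 1 u + br 1 u = br 1 u + 0)) // addr0.
by rewrite -{3}[1]mulr1 brLMl mulr1 mul1r.
Qed.

Lemma brw_iota c : br w (iota c) = - ((iota (alpha c) + w * iota (delta c)) * w).
Proof.
have h : br x (iota c) * w + x * br w (iota c) = 0 by rewrite -brLMl hxw brL1l.
have e : br w (iota c) = w * (x * br w (iota c)) by rewrite mulrA (mulrC w) hxw mul1r.
have h' : x * br w (iota c) = - (br x (iota c) * w) by apply/eqP; rewrite -addr_eq0 addrC h.
rewrite e h' hbrx.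
transitivity (- (w * iota (alpha c) * (x * w) + w * iota (delta c) * w)); last by rewrite hxw; ring.
ring.
Qed.

Lemma brw_pow m c : br (w ^+ m) (iota c) = - ((iota (alpha c) + w * iota (delta c)) * w ^+ m) *+ m.
Proof.
elim: m => [|m IH]; first by rewrite expr0 brL1l mulr0n.
by rewrite exprS brLMl IH brw_iota; ring.
Qed.

Lemma brwpow_w m : br (w ^+ m) w = 0.
Proof.
elim: m => [|m IH]; first by rewrite expr0 brL1l.
by rewrite exprS brLMl IH brL_self mul0r mulr0 addr0.
Qed.
Lemma brwpow_wpow m n : br (w ^+ m) (w ^+ n) = 0.
Proof.
elim: n => [|n IH]; first by rewrite expr0 brLA brL1l oppr0.
by rewrite exprS brLMr IH brwpow_w mul0r mulr0 addr0.
Qed.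
Lemma brx_wpow n : br x (w ^+ n) = 0.
Proof.
elim: n => [|n IH]; first by rewrite expr0 brLA brL1l oppr0.
by rewrite exprS brLMr IH brx_w mul0r mulr0 addr0.
Qed.

Lemma mono a b m n : br (iota a * w ^+ m) (iota b * w ^+ n) =
  (iota (brB a b) - iota (a * alpha b) *+ m + iota (alpha a * b) *+ n +
   w * (iota (delta a * b) *+ n - iota (a * delta b) *+ m)) * w ^+ (m + n).
Proof.
rewrite brLMr !brLMl hbrB brw_pow (brLA (iota a)) brw_pow brwpow_wpow.
rewrite !(kmM hi) exprD; ring.
Qed.

Lemma brx_evw (p : {poly B}) : br x (evw p) = x * evw (map_poly alpha p) + evw (map_poly delta p).
Proof.
rewrite (evw_wide (leqnn _)) (@evw_wide (size p)) ?size_poly // (@evw_wide (size p)) ?size_poly //.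
rewrite brL_sumr mulr_sumr -big_split; apply: eq_bigr => i _ /=.
rewrite brLMr brx_wpow mulr0 addr0 hbrx !coef_poly ltn_ord; ring.
Qed.

Lemma brev (p q : {poly B}) : br (evw p) (evw q) = evw (brc p q) +
   evw (map_poly alpha p * ('X * q^`()) - 'X * p^`() * map_poly alpha q) +
   w * evw (map_poly delta p * ('X * q^`()) - 'X * p^`() * map_poly delta q).
Proof.
have eA (f : B -> B) (r : {poly B}) : evw (map_poly f r) = \sum_(i < size r) iota (f r`_i) * w ^+ i.
  by rewrite (evw_wide (size_poly _ _)); apply: eq_bigr => i _; rewrite coef_poly ltn_ord.
have eD (r : {poly B}) : evw ('X * r^`()) = \sum_(i < size r) iota (r`_i *+ i) * w ^+ i.
  by rewrite Dpoly (evw_wide (size_poly _ _)); apply: eq_bigr => i _; rewrite coef_poly ltn_ord.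
have eD1 (P r : {poly B}) : evw (P * ('X * r^`())) = evw P * \sum_(i < size r) iota (r`_i *+ i) * w ^+ i.
  by rewrite evwM eD.
have eD2 (P r : {poly B}) : evw ('X * r^`() * P) = (\sum_(i < size r) iota (r`_i *+ i) * w ^+ i) * evw P.
  by rewrite evwM eD.
rewrite !evwB !eD1 !eD2 !eA (evw_wide (leqnn (size p))) (evw_wide (leqnn (size q))).
rewrite /brc evw_sum brL_suml.
rewrite !big_distrlr /= mulrBr !mulr_sumr -!sumrB -!big_split /=.
apply: eq_big => // i _.
rewrite evw_sum brL_sumr !mulr_sumr -!sumrB -!big_split /=; apply: eq_big => // j _.
rewrite mono evwM evwC evwXn !(kmMn hi) !(kmM hi) exprD; ring.
Qed.

Definition th t b := evw (E t b).

Lemma th_sum t b N : iter N delta b = 0 ->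
  th t b = \sum_(n < N) (cf t n) *: (iota (iter n delta b) * w ^+ n).
Proof.
move=> h; rewrite /th (evw_wide (sizeE t h)); apply: eq_bigr => i _.
by rewrite coefE (km_scale hi) scalerAl.
Qed.

Lemma th_morph t : kalg_morph (th t).
Proof.
split; first split.
- by move=> u v; rewrite /th E_add evwD.
- by move=> c u; rewrite /th E_scale evwM evwC (km_scale hi) (km1 hi) mulr_algl.
- by move=> u v; rewrite /th E_mul evwM.
- by rewrite /th E_one -polyC1 evwC (km1 hi).
Qed.

Lemma th_x t b : s * t = -1 -> br x (th t b) = th t (alpha b) * x.
Proof.
move=> hst; rewrite /th brx_evw E_alpha E_delta evwD !evwM evwX evwC hst (km_scale hi) (km1 hi).
transitivity (evw (E t (alpha b)) * x + evw (E t (delta b)) * (1 - x * w)); last by rewrite hxw subrr mulr0 addr0.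
rewrite scaleN1r; ring.
Qed.

Lemma th_br t a b : br (th t a) (th t b) = th t (brB a b).
Proof.
rewrite /th brev E_br evwD -[w]evwX -evwM -addrA; congr (_ + _); rewrite -evwD; congr (evw _).
rewrite !E_deriv !E_alpha !E_delta E_R0; ring.
Qed.

End LSide.

Lemma th_round (L1 L2 : comAlgType k) (i1 : B -> L1) (hi1 : kalg_morph i1) (w1 : L1)
  (i2 : B -> L2) (hi2 : kalg_morph i2) (w2 : L2) (F : L2 -> L1) (hF : kalg_morph F) t
  (hFi : forall c, F (i2 c) = th hi1 w1 (- t) c) (hFw : F w2 = w1) b :
  F (th hi2 w2 t b) = i1 b.
Proof.
rewrite (th_sum hi2 w2 t (nbP b)) -(rmE hF) rmorph_sum.
rewrite -[i1 b](evwC hi1 w1) -(E_inv t (nbP b)) evw_sum; apply: eq_bigr => n _.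
rewrite !evwM evwC evwXn (km_scale hi1) (km1 hi1) (rmE hF) (km_scale hF) (kmM hF) (kmX hF) hFi hFw.
by rewrite mulr_algl -scalerAl mulrC.
Qed.
End Exp.

Lemma km_comp (k : fieldType) (A B C : comAlgType k) (f : A -> B) (g : B -> C) :
  kalg_morph f -> kalg_morph g -> kalg_morph (fun a => g (f a)).
Proof.
case=> -[fA fZ] fM f1 [] [gA gZ] gM g1.
by split; [split=> *|move=> *|]; rewrite ?fA ?fZ ?fM ?f1 ?gA ?gZ ?gM ?g1.
Qed.

Lemma km_id (k : fieldType) (A : comAlgType k) : kalg_morph (fun a : A => a).
Proof. by split. Qed.

Lemma inv_map (k : fieldType) (A C : comAlgType k) (F : A -> C) (hF : kalg_morph F) x xi u ui :
  x * xi = 1 -> u * ui = 1 -> F x = u -> F xi = ui.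
Proof.
move=> hx hu hFx.
have e : F x * F xi = 1 by rewrite -(kmM hF) hx (km1 hF).
by rewrite -[F xi]mul1r -hu mulrAC -hFx e mul1r.
Qed.

Lemma der_uniq (k : fieldType) (B L C : comAlgType k) (iota : B -> L) (x xi : L)
  (hL : is_laurent iota x xi) (T : L -> C) (hT : kalg_morph T) (d1 d2 : L -> C) :
  (forall u v, d1 (u + v) = d1 u + d1 v) -> (forall u v, d1 (u * v) = d1 u * T v + T u * d1 v) ->
  (forall u v, d2 (u + v) = d2 u + d2 v) -> (forall u v, d2 (u * v) = d2 u * T v + T u * d2 v) ->
  (forall b, d1 (iota b) = d2 (iota b)) -> d1 x = d2 x -> d1 =1 d2.
Proof.
move=> a1 m1 a2 m2 hb hx.
have hxx : x * xi = 1 by case: hL.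
have z0 (d : L -> C) : (forall u v, d (u + v) = d u + d v) -> d 0 = 0.
  by move=> a; apply/eqP; rewrite -(addrI (d 0) (_ : d 0 + d 0 = d 0 + 0)) // addr0 -a addr0.
have z1 (d : L -> C) : (forall u v, d (u * v) = d u * T v + T u * d v) -> d 1 = 0.
  move=> m; apply/eqP; rewrite -(addrI (d 1) (_ : d 1 + d 1 = d 1 + 0)) // addr0.
  by rewrite -{3}[1]mulr1 m (km1 hT) mulr1 mul1r.
have dxi (d : L -> C) : (forall u v, d (u * v) = d u * T v + T u * d v) -> d xi = - (T xi * T xi * d x).
  move=> m; have h : d x * T xi + T x * d xi = 0 by rewrite -m hxx z1.
  have e : T x * T xi = 1 by rewrite -(kmM hT) hxx (km1 hT).
  have -> : d xi = T xi * (T x * d xi) by rewrite mulrA (mulrC _ (T x)) e mul1r.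
  have -> : T x * d xi = - (d x * T xi) by apply/eqP; rewrite -addr_eq0 addrC h.
  ring.
pose S v := d1 v = d2 v.
have Sadd u v : S u -> S v -> S (u + v) by rewrite /S a1 a2 => -> ->.
have Smul u v : S u -> S v -> S (u * v) by rewrite /S m1 m2 => -> ->.
have Spow v n : S v -> S (v ^+ n).
  move=> hv; elim: n => [|n IH]; first by rewrite /S expr0 z1 // z1.
  by rewrite exprS; apply: (Smul).
have Ssum n (F : 'I_n -> L) : (forall i, S (F i)) -> S (\sum_(i < n) F i).
  move=> hF; apply: (big_ind S); [by rewrite /S z0 // z0 | exact: Sadd | by move=> i _].
move=> z; have [N [p ->]] := laurent_rep hL z.
apply: (Smul); first by apply: (Spow); rewrite /S (dxi _ m1) (dxi _ m2) hx.
rewrite (evx_form hL); apply: (Ssum) => i; apply: (Smul); first exact: hb.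
exact: (Spow).
Qed.

Unset Implicit Arguments.

Theorem theorem3p8
  (k : fieldType) (char0 : [pchar k] =i pred0)
  (B : comAlgType k) (brB : B -> B -> B) (hB : poisson_bracket brB)
  (alpha delta : B -> B)
  (halpha : poisson_derivation brB alpha)
  (hdelta : derivation delta)
  (hdelta_br : forall a b, delta (brB a b) =
      brB (delta a) b + brB a (delta b) + alpha a * delta b - delta a * alpha b)
  (hnil : forall b, exists n, iter n delta b = 0)
  (s : k) (hs : s != 0)
  (halphadelta : forall b, alpha (delta b) = delta (alpha b + s *: b))
  (* B[y^{+-1}; alpha]_p *)
  (L1 : comAlgType k) (iota1 : B -> L1) (y yi : L1)
  (hL1 : is_laurent iota1 y yi) (br1 : L1 -> L1 -> L1)
  (hbr1 : poisson_bracket br1)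
  (hbr1B : forall a b, br1 (iota1 a) (iota1 b) = iota1 (brB a b))
  (hbr1y : forall b, br1 y (iota1 b) = iota1 (alpha b) * y)
  (* B[x^{+-1}; alpha, delta]_p *)
  (L2 : comAlgType k) (iota2 : B -> L2) (x xi : L2)
  (hL2 : is_laurent iota2 x xi) (br2 : L2 -> L2 -> L2)
  (hbr2 : poisson_bracket br2)
  (hbr2B : forall a b, br2 (iota2 a) (iota2 b) = iota2 (brB a b))
  (hbr2x : forall b, br2 x (iota2 b) = iota2 (alpha b) * x + iota2 (delta b)) :
  let theta_spec (Theta : L1 -> L2) :=
    [/\ kalg_morph Theta, bijective Theta,
        forall u v, Theta (br1 u v) = br2 (Theta u) (Theta v),
        (* Theta extends theta(b) = sum_n (1/n!) (-1/s)^n delta^n(b) x^{-n} *)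
        forall b N, iter N delta b = 0 ->
          Theta (iota1 b) =
          \sum_(n < N) (((n`!)%:R)^-1 * (- s^-1) ^+ n) *: (iota2 (iter n delta b) * xi ^+ n)
      & Theta y = x] in
  exists Theta : L1 -> L2, theta_spec Theta /\
    forall Theta' : L1 -> L2, theta_spec Theta' -> Theta' =1 Theta.
Proof.
move=> theta_spec.
have [hi1 hy _ _] := hL1; have [hi2 hx _ _] := hL2.
pose t := - s^-1.
have hst : s * t = -1 by rewrite /t mulrN mulfV.
pose th2 := th hnil hi2 xi t.
pose th1 := th hnil hi1 yi (- t).
have [Theta [hTm hTi hTy]] := laurent_ext hL1 (th_morph char0 hdelta hnil hi2 xi t) hx.
have [Psi [hPm hPi hPx]] := laurent_ext hL2 (th_morph char0 hdelta hnil hi1 yi (- t)) hy.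
have hTxi : Theta yi = xi := inv_map hTm hy hx hTy.
have hPxi : Psi xi = yi := inv_map hPm hx hy hPx.
have hsum : forall b N, iter N delta b = 0 -> Theta (iota1 b) =
    \sum_(n < N) (((n`!)%:R)^-1 * (- s^-1) ^+ n) *: (iota2 (iter n delta b) * xi ^+ n).
  by move=> b N hN; rewrite hTi (th_sum hdelta hnil hi2 xi t hN).
have spec : theta_spec Theta.
  split => //.
  - exists Psi.
    + apply: (laurent_uniq hL1 (km_comp hTm hPm) (km_id _)) => [b|]; last by rewrite /= hTy hPx.
      by rewrite /= hTi (@th_round _ char0 _ _ hdelta hnil _ _ _ hi1 yi _ hi2 xi _ hPm t hPi hPxi b).
    + apply: (laurent_uniq hL2 (km_comp hPm hTm) (km_id _)) => [b|]; last by rewrite /= hPx hTy.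
      rewrite /= hPi (@th_round _ char0 _ _ hdelta hnil _ _ _ hi2 xi _ hi1 yi _ hTm (- t)) // => c.
      by rewrite opprK hTi.
  -
    have d1A (u : L1) v z : Theta (br1 u (v + z)) = Theta (br1 u v) + Theta (br1 u z).
      by rewrite (brLDr hbr1) (kmD hTm).
    have d1M (u : L1) v z : Theta (br1 u (v * z)) = Theta (br1 u v) * Theta z + Theta v * Theta (br1 u z).
      by rewrite (brLMr hbr1) (kmD hTm) !(kmM hTm).
    have d2A (u : L1) v z : br2 (Theta u) (Theta (v + z)) = br2 (Theta u) (Theta v) + br2 (Theta u) (Theta z).
      by rewrite (kmD hTm) (brLDr hbr2).
    have d2M (u : L1) v z : br2 (Theta u) (Theta (v * z)) =
        br2 (Theta u) (Theta v) * Theta z + Theta v * br2 (Theta u) (Theta z).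
      by rewrite (kmM hTm) (brLMr hbr2).
    have G1 a b : Theta (br1 (iota1 a) (iota1 b)) = br2 (Theta (iota1 a)) (Theta (iota1 b)).
      by rewrite hbr1B !hTi (th_br char0 hB halpha hdelta hdelta_br hnil halphadelta hi2 hx hbr2 hbr2B hbr2x).
    have G2 b : Theta (br1 y (iota1 b)) = br2 (Theta y) (Theta (iota1 b)).
      by rewrite hbr1y (kmM hTm) !hTi hTy (th_x char0 halpha hdelta hnil halphadelta hi2 hx hbr2 hbr2x).
    have G3 : Theta (br1 y y) = br2 (Theta y) (Theta y).
      by rewrite (brL_self char0 hbr1) (brL_self char0 hbr2) (km0 hTm).
    have stage1 u : (exists a, u = iota1 a) \/ u = y -> forall v, Theta (br1 u v) = br2 (Theta u) (Theta v).
      move=> hu; apply: (der_uniq hL1 hTm (d1A u) (d1M u) (d2A u) (d2M u)).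
        move=> b; case: hu => [[a ->]|->]; [exact: G1 | exact: G2].
      case: hu => [[a ->]|->]; last exact: G3.
      by rewrite (brLA hbr1) (kmN hTm) G2 (brLA hbr2 (Theta y)) opprK.
    move=> u v.
    have flip (w z : L1) : Theta (br1 w z) = br2 (Theta w) (Theta z) -> Theta (br1 z w) = br2 (Theta z) (Theta w).
      by move=> H; rewrite (brLA hbr1) (kmN hTm) (brLA hbr2 (Theta z)) H.
    apply: (flip); apply: (der_uniq hL1 hTm (d1A v) (d1M v) (d2A v) (d2M v) _ _ u).
      by move=> b; apply: (flip); apply: (stage1); left; exists b.
    by apply: (flip); apply: (stage1); right.
exists Theta; split => // Theta' [hT'm _ _ hT'sum hT'y].
apply: (laurent_uniq hL1 hT'm hTm) => [b|]; last by rewrite hT'y hTy.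
have [N hN] := hnil b.
by rewrite (hT'sum b N hN) (hsum b N hN).
Qed.
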